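(* Let $(A,L',L'')$ be an almost twilled Lie-Rinehart algebra with $L'$ and $L''$ finitely generated and projective as $A$-modules. Then $(A,L',L'')$ is a twilled Lie-Rinehart algebra if and only if $(A,L,D)=(A,L'\ltimes(L'')^*,L''\ltimes(L')^* )$ is a Lie-Rinehart bialgebra.
   Context: $R$ commutative ring (with $2,3$ invertible), $A$ commutative $R$-algebra. Lie-Rinehart algebra $(A,L)$: $R$-Lie algebra and $A$-module with Lie morphism $L\to\mathrm{Der}_R(A)$ satisfying $(a\alpha)(b)=a\,\alpha(b)$, $[\alpha,a\beta]=\alpha(a)\beta+a[\alpha,\beta]$. Left $(A,L)$-module: $A$-module with left $L$-module structure, $(a\alpha)\cdot m=a(\alpha\cdot m)$, $\alpha\cdot(am)=\alpha(a)m+a(\alpha\cdot m)$. Almost twilled Lie-Rinehart algebra $(A,L',L'')$: Lie-Rinehart algebras $(A,L')$, $(A,L'')$ (brackets $[\cdot,\cdot]',[\cdot,\cdot]''$), a left $(A,L')$-module structure $x\cdot\xi$ on $L''$, a left $(A,L'')$-module structure $\xi\cdot x$ on $L'$; twilled if $L'\oplus L''$ with bracket $[(x,\xi),(y,\eta)]=([x,y]'+\xi\cdot y-\eta\cdot x,[\xi,\eta]''+x\cdot\eta-y\cdot\xi)$ and action $(x,\xi)(a)=x(a)+\xi(a)$ is a Lie-Rinehart algebra. $(L'')^*=\mathrm{Hom}_A(L'',A)$ is a left $(A,L')$-module via $(x\cdot\phi)(\xi)=x(\phi(\xi))-\phi(x\cdot\xi)$; $L'\ltimes(L'')^*$ is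 $L'\oplus(L'')^*$ with bracket $[(x,\phi),(y,\psi)]=([x,y]',x\cdot\psi-y\cdot\phi)$ and action $(x,\phi)(a)=x(a)$; $L''\ltimes(L')^*$ analogously. Lie-Rinehart bialgebra: $(A,L,D)$ with $L,D$ finitely generated projective $(R,A)$-Lie algebras, $D\cong\mathrm{Hom}_A(L,A)$, such that $d_*[x,y]=[d_*x,y]+[x,d_*y]$ for $x,y\in L$, where $d_*$ is the Lie-Rinehart differential on $\mathrm{Alt}_A(D,A)\cong\Lambda_AL$ (formula $(df)(\alpha_1,..,\alpha_n)=(-1)^n[\sum_i(-1)^{i-1}\alpha_i(f(..\widehat{\alpha_i}..))+\sum_{j<k}(-1)^{j+k}f([\alpha_j,\alpha_k],..)]$ for $D$) and $[\cdot,\cdot]$ the Gerstenhaber bracket on $\Lambda_AL$ induced by the Lie-Rinehart structure of $L$. *)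

(* Defs.v *)
From HB Require Import structures.
From mathcomp Require Import all_boot all_order all_algebra.
From Stdlib Require Import ClassicalEpsilon.
Set Implicit Arguments. Unset Strict Implicit. Unset Printing Implicit Defensive.
Import GRing.Theory.
Local Open Scope ring_scope.

(* Elements of a module are handled through a carrier type [X], a membership
   predicate [mem] (to carve out e.g. Hom_A(M,A) inside M -> A) and explicit
   module operations. *)
Record modops (A X : Type) := MOps {
  madd : X -> X -> X; mzero : X; mopp : X -> X; mscale : A -> X -> X }.

Section Generic.
Variables (R : comNzRingType) (A : comAlgType R).

Definition lmod_ops (M : lmodType A) : modops A M := MOps +%R 0 -%R *:%R.

Definition is_Amodule (X : Type) (mem : X -> Prop) (o : modops A X) : Prop :=
  [/\ [/\ mem (mzero o),
      (forall x y, mem x -> mem y -> mem (madd o x y)),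
      (forall x, mem x -> mem (mopp o x)) &
      (forall a x, mem x -> mem (mscale o a x))],
      (forall x y z, mem x -> mem y -> mem z ->
          madd o x (madd o y z) = madd o (madd o x y) z),
      (forall x y, mem x -> mem y -> madd o x y = madd o y x),
      [/\ (forall x, mem x -> madd o (mzero o) x = x) &
          (forall x, mem x -> madd o (mopp o x) x = mzero o)] &
      [/\ (forall a b x, mem x -> mscale o a (mscale o b x) = mscale o (a * b) x),
          (forall x, mem x -> mscale o 1 x = x),
          (forall a x y, mem x -> mem y ->
              mscale o a (madd o x y) = madd o (mscale o a x) (mscale o a y)) &
          (forall a b x, mem x ->
              mscale o (a + b) x = madd o (mscale o a x) (mscale o b x))]].

Definition is_LieRinehart (X : Type) (mem : X -> Prop) (o : modops A X)
    (br : X -> X -> X) (anc : X -> A -> A) : Prop :=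
  [/\ is_Amodule mem o,
      (forall x y, mem x -> mem y -> mem (br x y)),
      [/\
      (forall x y z, mem x -> mem y -> mem z ->
          br (madd o x y) z = madd o (br x z) (br y z) /\
          br z (madd o x y) = madd o (br z x) (br z y)) &
      (forall (r : R) x y, mem x -> mem y ->
          br (mscale o r%:A x) y = mscale o r%:A (br x y) /\
          br x (mscale o r%:A y) = mscale o r%:A (br x y))],
      [/\
      (forall x, mem x -> br x x = mzero o),
      (forall x y z, mem x -> mem y -> mem z ->
          madd o (br x (br y z)) (madd o (br y (br z x)) (br z (br x y)))
          = mzero o) &
      (forall x, mem x ->
          [/\ (forall a b, anc x (a + b) = anc x a + anc x b),
              (forall (r : R) a, anc x (r *: a) = r *: anc x a) &
              (forall a b, anc x (a * b) = a * anc x b + anc x a * b)])] &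
      [/\ (forall x y a, mem x -> mem y -> anc (madd o x y) a = anc x a + anc y a),
          (forall b x a, mem x -> anc (mscale o b x) a = b * anc x a),
          (forall x y a, mem x -> mem y ->
              anc (br x y) a = anc x (anc y a) - anc y (anc x a)) &
          (forall x y a, mem x -> mem y ->
              br x (mscale o a y) = madd o (mscale o (anc x a) y) (mscale o a (br x y)))]].

Definition is_LRmodule (X : Type) (memL : X -> Prop) (oL : modops A X)
    (brL : X -> X -> X) (ancL : X -> A -> A)
    (M : Type) (memM : M -> Prop) (oM : modops A M) (act : X -> M -> M) : Prop :=
  [/\ is_Amodule memM oM,
      (forall x m, memL x -> memM m -> memM (act x m)),
      [/\
      (forall x y m, memL x -> memL y -> memM m ->
          act (madd oL x y) m = madd oM (act x m) (act y m)),
      (forall x m n, memL x -> memM m -> memM n ->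
          act x (madd oM m n) = madd oM (act x m) (act x n)) &
      (forall x y m, memL x -> memL y -> memM m ->
          act (brL x y) m = madd oM (act x (act y m)) (mopp oM (act y (act x m))))],
      (forall a x m, memL x -> memM m -> act (mscale oL a x) m = mscale oM a (act x m)) &
      (forall a x m, memL x -> memM m ->
          act x (mscale oM a m) = madd oM (mscale oM (ancL x a) m) (mscale oM a (act x m)))].

(* finitely generated projective: a retract of a free module A^n *)
Definition is_fgp (X : Type) (mem : X -> Prop) (o : modops A X) : Prop :=
  exists (n : nat) (s : X -> 'rV[A]_n) (r : 'rV[A]_n -> X),
    [/\ (forall v, mem (r v)),
        (forall a x y, mem x -> mem y -> s (madd o (mscale o a x) y) = a *: s x + s y),
        (forall a v w, r (a *: v + w) = madd o (mscale o a (r v)) (r w)) &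
        (forall x, mem x -> r (s x) = x)].

(* [pr] identifies D with Hom_A(L, A) (A-module isomorphism) *)
Definition is_dual_pairing (XL : Type) (memL : XL -> Prop) (oL : modops A XL)
    (XD : Type) (memD : XD -> Prop) (oD : modops A XD) (pr : XD -> XL -> A) : Prop :=
  [/\ (forall al a x y, memD al -> memL x -> memL y ->
          pr al (madd oL (mscale oL a x) y) = a * pr al x + pr al y),
      (forall al be a x, memD al -> memD be -> memL x ->
          pr (madd oD (mscale oD a al) be) x = a * pr al x + pr be x),
      (forall al be, memD al -> memD be ->
          (forall x, memL x -> pr al x = pr be x) -> al = be) &
      (forall f : XL -> A,
          (forall a x y, memL x -> memL y -> f (madd oL (mscale oL a x) y) = a * f x + f y) ->
          exists2 al, memD al & forall x, memL x -> pr al x = f x)].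

(* Lie-Rinehart differential d_* : L = Alt^1_A(D,A) -> Alt^2_A(D,A),
   x seen as the 1-form al |-> <al, x>; sign (-1)^n with n = 2. *)
Definition dstar (XL XD : Type) (brD : XD -> XD -> XD) (ancD : XD -> A -> A)
    (pr : XD -> XL -> A) (x : XL) : XD -> XD -> A :=
  fun al be => ancD al (pr be x) - ancD be (pr al x) - pr (brD al be) x.

Definition coad (XL XD : Type) (memL : XL -> Prop) (memD : XD -> Prop)
    (brL : XL -> XL -> XL) (ancL : XL -> A -> A) (pr : XD -> XL -> A)
    (y : XL) (al : XD) : XD :=
  epsilon (inhabits al) (fun ga => memD ga /\
     forall x, memL x -> pr ga x = ancL y (pr al x) - pr al (brL y x)).

(* Gerstenhaber bracket [y, w] of y in L with w in Lambda^2_A L = Alt^2_A(D,A)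
   (the Lie derivative along y); note [w, y] = - [y, w]. *)
Definition gbr1 (XL XD : Type) (memL : XL -> Prop) (memD : XD -> Prop)
    (brL : XL -> XL -> XL) (ancL : XL -> A -> A) (pr : XD -> XL -> A)
    (y : XL) (w : XD -> XD -> A) : XD -> XD -> A :=
  fun al be => ancL y (w al be)
    - w (coad memL memD brL ancL pr y al) be
    - w al (coad memL memD brL ancL pr y be).

Definition is_LR_bialgebra
    (XL : Type) (memL : XL -> Prop) (oL : modops A XL)
    (brL : XL -> XL -> XL) (ancL : XL -> A -> A)
    (XD : Type) (memD : XD -> Prop) (oD : modops A XD)
    (brD : XD -> XD -> XD) (ancD : XD -> A -> A) (pr : XD -> XL -> A) : Prop :=
  [/\ is_LieRinehart memL oL brL ancL, is_LieRinehart memD oD brD ancD,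
      is_fgp memL oL /\ is_fgp memD oD, is_dual_pairing memL oL memD oD pr &
      forall x y, memL x -> memL y -> forall al be, memD al -> memD be ->
        dstar brD ancD pr (brL x y) al be
        = - gbr1 memL memD brL ancL pr y (dstar brD ancD pr x) al be
          + gbr1 memL memD brL ancL pr x (dstar brD ancD pr y) al be].

Variables (L1 L2 : lmodType A).

Definition memT (X : Type) : X -> Prop := fun _ => True.

Definition almost_twilled (br1 : L1 -> L1 -> L1) (anc1 : L1 -> A -> A)
    (br2 : L2 -> L2 -> L2) (anc2 : L2 -> A -> A)
    (act1 : L1 -> L2 -> L2) (act2 : L2 -> L1 -> L1) : Prop :=
  [/\ is_LieRinehart (@memT L1) (lmod_ops L1) br1 anc1,
      is_LieRinehart (@memT L2) (lmod_ops L2) br2 anc2,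
      is_LRmodule (@memT L1) (lmod_ops L1) br1 anc1 (@memT L2) (lmod_ops L2) act1 &
      is_LRmodule (@memT L2) (lmod_ops L2) br2 anc2 (@memT L1) (lmod_ops L1) act2].

Definition sum_ops : modops A (L1 * L2) :=
  MOps (fun u v => (u.1 + v.1, u.2 + v.2)) (0, 0) (fun u => (- u.1, - u.2))
       (fun a u => (a *: u.1, a *: u.2)).

Definition twilled (br1 : L1 -> L1 -> L1) (anc1 : L1 -> A -> A)
    (br2 : L2 -> L2 -> L2) (anc2 : L2 -> A -> A)
    (act1 : L1 -> L2 -> L2) (act2 : L2 -> L1 -> L1) : Prop :=
  is_LieRinehart (@memT (L1 * L2)) sum_ops
    (fun u v => (br1 u.1 v.1 + act2 u.2 v.1 - act2 v.2 u.1,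
                 br2 u.2 v.2 + act1 u.1 v.2 - act1 v.1 u.2))
    (fun u a => anc1 u.1 a + anc2 u.2 a).
End Generic.

(* Semidirect product  M |x (N)^*  where N^* = Hom_A(N, A), given the
   Lie-Rinehart structure (brM, ancM) on M and a left (A,M)-module structure
   [act] on N; the carrier is M * (N -> A) restricted to A-linear functionals. *)
Section Semidirect.
Variables (R : comNzRingType) (A : comAlgType R) (M N : lmodType A).

Definition is_Alin (f : N -> A) : Prop :=
  forall a x y, f (a *: x + y) = a * f x + f y.

Definition sd_mem : M * (N -> A) -> Prop := fun u => is_Alin u.2.

Definition sd_ops : modops A (M * (N -> A)) :=
  MOps (fun u v => (u.1 + v.1, fun n => u.2 n + v.2 n)) (0, fun _ => 0)
       (fun u => (- u.1, fun n => - u.2 n)) (fun a u => (a *: u.1, fun n => a * u.2 n)).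

Definition dual_act (ancM : M -> A -> A) (act : M -> N -> N)
    (x : M) (phi : N -> A) : N -> A :=
  fun n => ancM x (phi n) - phi (act x n).

Definition sd_br (brM : M -> M -> M) (ancM : M -> A -> A) (act : M -> N -> N)
    (u v : M * (N -> A)) : M * (N -> A) :=
  (brM u.1 v.1, fun n => dual_act ancM act u.1 v.2 n - dual_act ancM act v.1 u.2 n).

Definition sd_anc (ancM : M -> A -> A) (u : M * (N -> A)) (a : A) : A := ancM u.1 a.
End Semidirect.

Definition sd_pairing (R : comNzRingType) (A : comAlgType R) (L1 L2 : lmodType A)
    (al : L2 * (L1 -> A)) (u : L1 * (L2 -> A)) : A := al.2 u.1 + u.2 al.1.

(* Main.v *)
Require Import Defs.
From HB Require Import structures.
From mathcomp Require Import all_boot all_order all_algebra.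
From mathcomp Require Import ring.
From Stdlib Require Import ClassicalEpsilon FunctionalExtensionality.
Set Implicit Arguments. Unset Strict Implicit. Unset Printing Implicit Defensive.
Import GRing.Theory.
Local Open Scope ring_scope.



Lemma dbl0 (V : zmodType) (a : V) : a + a = a -> a = 0.
Proof. by move/eqP; rewrite -subr_eq0 addrK => /eqP. Qed.

Section LR.
Variables (R : comNzRingType) (A : comAlgType R) (L : lmodType A)
  (br : L -> L -> L) (anc : L -> A -> A).
Hypothesis HL : is_LieRinehart (@memT L) (lmod_ops L) br anc.

Lemma LR_brDl x y z : br (x + y) z = br x z + br y z.
Proof. by case: HL => _ _ [H _] _ _; case: (H x y z I I I). Qed.
Lemma LR_brDr x y z : br z (x + y) = br z x + br z y.
Proof. by case: HL => _ _ [H _] _ _; case: (H x y z I I I). Qed.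
Lemma LR_alt x : br x x = 0.
Proof. by case: HL => _ _ _ [H _ _] _; apply: H. Qed.
Lemma LR_jac x y z : br x (br y z) + (br y (br z x) + br z (br x y)) = 0.
Proof. by case: HL => _ _ _ [_ H _] _; apply: H. Qed.
Lemma LR_ancD x a b : anc x (a + b) = anc x a + anc x b.
Proof. by case: HL => _ _ _ [_ _ H] _; case: (H x I). Qed.
Lemma LR_ancM x a b : anc x (a * b) = a * anc x b + anc x a * b.
Proof. by case: HL => _ _ _ [_ _ H] _; case: (H x I). Qed.
Lemma LR_ancZ x (r : R) a : anc x (r *: a) = r *: anc x a.
Proof. by case: HL => _ _ _ [_ _ H] _; case: (H x I). Qed.
Lemma LR_ancDl x y a : anc (x + y) a = anc x a + anc y a.
Proof. by case: HL => _ _ _ _ [H _ _ _]; apply: H. Qed.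
Lemma LR_ancZl b x a : anc (b *: x) a = b * anc x a.
Proof. by case: HL => _ _ _ _ [_ H _ _]; apply: H. Qed.
Lemma LR_ancbr x y a : anc (br x y) a = anc x (anc y a) - anc y (anc x a).
Proof. by case: HL => _ _ _ _ [_ _ H _]; apply: H. Qed.
Lemma LR_brZr x y a : br x (a *: y) = anc x a *: y + a *: br x y.
Proof. by case: HL => _ _ _ _ [_ _ _ H]; apply: H. Qed.

Lemma LR_br0r x : br x 0 = 0.
Proof. by apply: dbl0; rewrite -LR_brDr addr0. Qed.
Lemma LR_br0l x : br 0 x = 0.
Proof. by apply: dbl0; rewrite -LR_brDl addr0. Qed.
Lemma LR_brNr x y : br x (- y) = - br x y.
Proof. by apply: (addrI (br x y)); rewrite -LR_brDr !subrr LR_br0r. Qed.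
Lemma LR_brNl x y : br (- x) y = - br x y.
Proof. by apply: (addrI (br x y)); rewrite -LR_brDl !subrr LR_br0l. Qed.
Lemma LR_brC x y : br x y = - br y x.
Proof.
apply/eqP; rewrite -subr_eq0 opprK.
have := LR_alt (x + y); rewrite LR_brDl !LR_brDr !LR_alt add0r addr0 => ->.
by [].
Qed.
Lemma LR_brZl x y a : br (a *: x) y = a *: br x y - anc y a *: x.
Proof. by rewrite LR_brC LR_brZr opprD addrC -scalerN -LR_brC. Qed.
Lemma LR_anc0 x : anc x 0 = 0.
Proof. by apply: dbl0; rewrite -LR_ancD addr0. Qed.
Lemma LR_ancN x a : anc x (- a) = - anc x a.
Proof. by apply: (addrI (anc x a)); rewrite -LR_ancD !subrr LR_anc0. Qed.
Lemma LR_anc0l a : anc 0 a = 0.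
Proof. by rewrite -(scale0r (0 : L)) LR_ancZl mul0r. Qed.
Lemma LR_ancNl x a : anc (- x) a = - anc x a.
Proof. by rewrite -scaleN1r LR_ancZl mulN1r. Qed.
Lemma LR_anc1 x : anc x 1 = 0.
Proof.
by apply: dbl0; rewrite -[in RHS](mulr1 1) LR_ancM mulr1 mul1r.
Qed.
Lemma LR_ancRA x (r : R) : anc x r%:A = 0.
Proof. by rewrite LR_ancZ LR_anc1 scaler0. Qed.
End LR.

Section LRmod.
Variables (R : comNzRingType) (A : comAlgType R) (L M : lmodType A)
  (br : L -> L -> L) (anc : L -> A -> A) (act : L -> M -> M).
Hypothesis HM : is_LRmodule (@memT L) (lmod_ops L) br anc (@memT M) (lmod_ops M) act.

Lemma LM_actDl x y m : act (x + y) m = act x m + act y m.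
Proof. by case: HM => _ _ [H _ _] _ _; apply: H. Qed.
Lemma LM_actDr x m n : act x (m + n) = act x m + act x n.
Proof. by case: HM => _ _ [_ H _] _ _; apply: H. Qed.
Lemma LM_actbr x y m : act (br x y) m = act x (act y m) - act y (act x m).
Proof. by case: HM => _ _ [_ _ H] _ _; apply: H. Qed.
Lemma LM_actZl a x m : act (a *: x) m = a *: act x m.
Proof. by case: HM => _ _ _ H _; apply: H. Qed.
Lemma LM_actZr a x m : act x (a *: m) = anc x a *: m + a *: act x m.
Proof. by case: HM => _ _ _ _ H; apply: H. Qed.
Lemma LM_act0l m : act 0 m = 0.
Proof. by rewrite -(scale0r (0 : L)) LM_actZl scale0r. Qed.
Lemma LM_act0r x : act x 0 = 0.
Proof. by apply: dbl0; rewrite -LM_actDr addr0. Qed.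
Lemma LM_actNl x m : act (- x) m = - act x m.
Proof. by rewrite -scaleN1r LM_actZl scaleN1r. Qed.
Lemma LM_actNr x m : act x (- m) = - act x m.
Proof. by apply: (addrI (act x m)); rewrite -LM_actDr !subrr LM_act0r. Qed.
End LRmod.

Section Lin.
Variables (R : comNzRingType) (A : comAlgType R) (N : lmodType A) (f : N -> A).
Hypothesis hf : is_Alin f.
Lemma lin0 : f 0 = 0.
Proof. by have := hf 1 0 0; rewrite scale1r addr0 mul1r => h; apply: dbl0; rewrite -h. Qed.
Lemma linD x y : f (x + y) = f x + f y.
Proof. by have := hf 1 x y; rewrite scale1r mul1r. Qed.
Lemma linZ a x : f (a *: x) = a * f x.
Proof. by have := hf a x 0; rewrite addr0 lin0 addr0. Qed.
Lemma linN x : f (- x) = - f x.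
Proof. by rewrite -scaleN1r linZ mulN1r. Qed.
End Lin.



Section Fgp.
Variables (R : comNzRingType) (A : comAlgType R) (M : lmodType A).
Hypothesis HF : is_fgp (@memT M) (lmod_ops M).

Lemma lin_sum (T : M -> A) (hT : is_Alin T) n (c : 'I_n -> A) (e : 'I_n -> M) :
  T (\sum_i c i *: e i) = \sum_i c i * T (e i).
Proof.
apply: (big_rec2 (fun v a => T v = a)); first exact: lin0.
by move=> i v a _ <-; rewrite (linD hT) (linZ hT).
Qed.

Lemma fgp_basis : exists n (c : 'I_n -> M -> A) (e : 'I_n -> M),
  (forall i, is_Alin (c i)) /\ (forall x, x = \sum_i c i x *: e i).
Proof.
case: HF => n [s [r [_ hs hr hrs]]].
have r0 : r 0 = 0.
  by apply: dbl0; have := hr 1 0 0; rewrite scale1r addr0 /= scale1r => <-.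
exists n, (fun i x => s x 0 i), (fun i => r 'e_i); split.
  by move=> i a x y; have := hs a x y I I; rewrite /= => ->; rewrite !mxE.
move=> x; rewrite -{1}(hrs x I) {1}(row_sum_delta (s x)).
apply: (big_rec2 (fun v w => r v = w)) => // i v w _ <-.
by have := hr (s x 0 i) 'e_i v.
Qed.

Lemma fgp_sep v : (forall w : M -> A, is_Alin w -> w v = 0) -> v = 0.
Proof.
move=> H; case: fgp_basis => n [c [e [hc he]]].
by rewrite (he v) big1 // => i _; rewrite H ?scale0r.
Qed.

Lemma fgp_expand (T : M -> A) : is_Alin T -> exists n (c : 'I_n -> M -> A) (e : 'I_n -> M),
  (forall i, is_Alin (c i)) /\ (forall x, T x = \sum_i c i x * T (e i)).
Proof.
move=> hT; case: fgp_basis => n [c [e [hc he]]].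
by exists n, c, e; split => // x; rewrite {1}(he x) lin_sum.
Qed.
End Fgp.



Ltac fext := let n := fresh "n" in apply: functional_extensionality => n.

Section LinComb.
Variables (R : comNzRingType) (A : comAlgType R) (N : lmodType A).
Lemma lin_zero : is_Alin (fun _ : N => 0 : A).
Proof. by move=> a x y; rewrite mulr0 addr0. Qed.
Lemma lin_add (f g : N -> A) : is_Alin f -> is_Alin g -> is_Alin (fun n => f n + g n).
Proof. by move=> hf hg a x y; rewrite hf hg; ring. Qed.
Lemma lin_sub (f g : N -> A) : is_Alin f -> is_Alin g -> is_Alin (fun n => f n - g n).
Proof. by move=> hf hg a x y; rewrite hf hg; ring. Qed.
Lemma lin_opp (f : N -> A) : is_Alin f -> is_Alin (fun n => - f n).
Proof. by move=> hf a x y; rewrite hf; ring. Qed.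
Lemma lin_scale (f : N -> A) b : is_Alin f -> is_Alin (fun n => b * f n).
Proof. by move=> hf a x y; rewrite hf; ring. Qed.
End LinComb.

Section SDmod.
Variables (R : comNzRingType) (A : comAlgType R) (M N : lmodType A).
Lemma sd_Amodule : is_Amodule (@sd_mem R A M N) (sd_ops M N).
Proof.
split.
- split.
  + exact: lin_zero.
  + by move=> u v hu hv; apply: lin_add.
  + by move=> u hu; apply: lin_opp.
  + by move=> a u hu; apply: lin_scale.
- move=> [x f] [y g] [z h] _ _ _ /=; f_equal; first by rewrite addrA.
  by fext; ring.
- move=> [x f] [y g] _ _ /=; f_equal; first by rewrite addrC.
  by fext; ring.
- split.
  + move=> [x f] _ /=; f_equal; first by rewrite add0r.
    by fext; ring.
  + move=> [x f] _ /=; f_equal; first by rewrite addNr.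
    by fext; ring.
- split.
  + move=> a b [x f] _ /=; f_equal; first by rewrite scalerA.
    by fext; ring.
  + move=> [x f] _ /=; f_equal; first by rewrite scale1r.
    by fext; ring.
  + move=> a [x f] [y g] _ _ /=; f_equal; first by rewrite scalerDr.
    by fext; ring.
  + move=> a b [x f] _ /=; f_equal; first by rewrite scalerDl.
    by fext; ring.
Qed.
End SDmod.

Section SD.
Variables (R : comNzRingType) (A : comAlgType R) (M N : lmodType A)
  (brM : M -> M -> M) (ancM : M -> A -> A) (act : M -> N -> N).
Hypothesis HM : is_LieRinehart (@memT M) (lmod_ops M) brM ancM.
Hypothesis HA : is_LRmodule (@memT M) (lmod_ops M) brM ancM (@memT N) (lmod_ops N) act.

Lemma dual_lin x f : is_Alin f -> is_Alin (dual_act ancM act x f).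
Proof.
move=> hf a n m; rewrite /dual_act.
rewrite (LM_actDr HA) (LM_actZr HA) !(linD hf) !(linZ hf).
rewrite !(LR_ancD HM) (LR_ancM HM); ring.
Qed.

Lemma sd_LR : is_LieRinehart (@sd_mem R A M N) (sd_ops M N)
   (sd_br brM ancM act) (sd_anc ancM).
Proof.
split.
- exact: sd_Amodule.
- move=> [x f] [y g] hf hg; rewrite /sd_mem /sd_br /=.
  by apply: lin_sub; apply: dual_lin.
- split.
  + move=> [x f] [y g] [z h] hf hg hh; rewrite /sd_mem /= in hf hg hh.
    rewrite /sd_br /dual_act /=; split; f_equal.
    * by rewrite (LR_brDl HM).
    * fext; rewrite (LR_ancDl HM) (LM_actDl HA) (linD hh) !(LR_ancD HM); ring.
    * by rewrite (LR_brDr HM).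
    * fext; rewrite (LR_ancDl HM) (LM_actDl HA) (linD hh) !(LR_ancD HM); ring.
  + move=> r [x f] [y g] hf hg; rewrite /sd_mem /= in hf hg.
    rewrite /sd_br /dual_act /=; split; f_equal.
    * by rewrite (LR_brZl HM) (LR_ancRA HM) scale0r subr0.
    * fext; rewrite (LR_ancZl HM) (LM_actZl HA) (linZ hg) (LR_ancM HM) (LR_ancRA HM); ring.
    * by rewrite (LR_brZr HM) (LR_ancRA HM) scale0r add0r.
    * fext; rewrite (LR_ancZl HM) (LM_actZl HA) (linZ hf) (LR_ancM HM) (LR_ancRA HM); ring.
- split.
  + move=> [x f] hf; rewrite /sd_br /=; f_equal; first exact: (LR_alt HM).
    by fext; rewrite subrr.
  + move=> [x f] [y g] [z h] hf hg hh; rewrite /sd_mem /= in hf hg hh.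
    rewrite /sd_br /dual_act /=; f_equal; first exact: (LR_jac HM).
    fext; rewrite !(LR_ancbr HM) !(LM_actbr HA) !(linD hf) !(linD hg) !(linD hh).
    rewrite !(linN hf) !(linN hg) !(linN hh) !(LR_ancD HM, LR_ancN HM); ring.
  + move=> [x f] _; rewrite /sd_anc /=; split.
    * exact: (LR_ancD HM).
    * exact: (LR_ancZ HM).
    * exact: (LR_ancM HM).
- split.
  + by move=> [x f] [y g] a _ _; rewrite /sd_anc /= (LR_ancDl HM).
  + by move=> b [x f] a _; rewrite /sd_anc /= (LR_ancZl HM).
  + by move=> [x f] [y g] a _ _; rewrite /sd_anc /= (LR_ancbr HM).
  + move=> [x f] [y g] a hf hg; rewrite /sd_mem /= in hf hg.
    rewrite /sd_br /sd_anc /dual_act /=; f_equal; first exact: (LR_brZr HM).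
    fext; rewrite (LR_ancZl HM) (LM_actZl HA) (linZ hf) (LR_ancM HM); ring.
Qed.
End SD.



Section SDfgp.
Variables (R : comNzRingType) (A : comAlgType R) (M N : lmodType A).
Hypothesis HFM : is_fgp (@memT M) (lmod_ops M).
Hypothesis HFN : is_fgp (@memT N) (lmod_ops N).

Lemma sd_fgp : is_fgp (@sd_mem R A M N) (sd_ops M N).
Proof.
case: HFM => n1 [s1 [r1 [_ hs1 hr1 hrs1]]].
case: (fgp_basis HFN) => n2 [c [e [hc he]]].
exists (n1 + n2)%N.
exists (fun u => row_mx (s1 u.1) (\row_i u.2 (e i))).
exists (fun v => (r1 (lsubmx v), fun n => \sum_i rsubmx v 0 i * c i n)).
split.
- move=> v a x y; rewrite /=.
  rewrite !big_distrr -big_split /=; apply: eq_bigr => i _.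
  rewrite (hc i); ring.
- move=> a [x f] [y g] hf hg /=.
  rewrite scale_row_mx add_row_mx; have := hs1 a x y I I; rewrite /= => ->.
  by congr row_mx; apply/rowP => i; rewrite !mxE.
- move=> a v w /=; f_equal.
  + by rewrite linearD linearZ /=; have := hr1 a (lsubmx v) (lsubmx w).
  + fext; rewrite linearD linearZ /= big_distrr -big_split /=.
    by apply: eq_bigr => i _; rewrite !mxE; ring.
- move=> [x f] hf /=; rewrite row_mxKl row_mxKr; f_equal; first exact: hrs1.
  fext; rewrite [in RHS](he n) (lin_sum (T := f) hf).
  by apply: eq_bigr => i _; rewrite mxE mulrC.
Qed.
End SDfgp.



Section Pairing.
Variables (R : comNzRingType) (A : comAlgType R) (M N : lmodType A).
Hypothesis HFN : is_fgp (@memT N) (lmod_ops N).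

Lemma lin_sumf n (a : 'I_n -> A) (c : 'I_n -> N -> A) (s : seq 'I_n) :
  (forall i, is_Alin (c i)) -> is_Alin (fun x => \sum_(i <- s) a i * c i x).
Proof.
move=> hc b x y; rewrite big_distrr -big_split /=; apply: eq_bigr => i _.
rewrite (hc i); ring.
Qed.

Lemma sd_pairing_dual : is_dual_pairing (@sd_mem R A M N) (sd_ops M N)
  (@sd_mem R A N M) (sd_ops N M) (@sd_pairing R A M N).
Proof.
split.
- move=> [xi psi] a [x phi] [y chi] hpsi _ _; rewrite /sd_mem /= in hpsi.
  rewrite /sd_pairing /= hpsi; ring.
- move=> [xi psi] [eta om] a [x phi] _ _ hphi; rewrite /sd_mem /= in hphi.
  rewrite /sd_pairing /= hphi; ring.
- move=> [xi psi] [eta om] hpsi hom H; rewrite /sd_mem /= in hpsi hom.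
  f_equal.
  + apply/eqP; rewrite -subr_eq0; apply/eqP; apply: (fgp_sep HFN) => w hw.
    have := H (0, w) hw; rewrite /sd_pairing /= (lin0 hpsi) (lin0 hom) !add0r.
    by rewrite (linD hw) (linN hw) => ->; rewrite subrr.
  + fext; have := H (n, fun _ => 0) (@lin_zero _ _ _).
    by rewrite /sd_pairing /= !addr0.
- move=> f hf.
  case: (fgp_basis HFN) => n [c [e [hc he]]].
  have f0 : f (0, fun _ => 0) = 0.
    apply: dbl0; have := hf 1 (0, fun _ => 0) (0, fun _ => 0) (@lin_zero _ _ _) (@lin_zero _ _ _).
    move=> h; rewrite -[X in X + _ = _](mul1r (f _)) -h; congr f; rewrite /=; f_equal; first by rewrite scaler0 addr0.
    by fext; rewrite mulr0 addr0.
  have fsum : forall (a : 'I_n -> A) (s : seq 'I_n),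
      f (0, fun x => \sum_(i <- s) a i * c i x) = \sum_(i <- s) a i * f (0, c i).
    move=> a; elim=> [|i s IH].
      rewrite big_nil -f0; congr f; f_equal; by fext; rewrite big_nil.
    rewrite big_cons -IH -(hf (a i) (0, c i) (0, fun x => \sum_(i <- s) a i * c i x)).
    + congr f; rewrite /=; f_equal; first by rewrite scaler0 addr0.
      by fext; rewrite big_cons.
    + exact: hc.
    + exact: lin_sumf.
  exists (\sum_i f (0, c i) *: e i, fun x => f (x, fun _ => 0)).
    move=> a x y /=; rewrite -(hf a (x, fun _ => 0) (y, fun _ => 0) (@lin_zero _ _ _) (@lin_zero _ _ _)).
    by congr f; rewrite /=; f_equal; fext; rewrite mulr0 addr0.
  move=> [x phi] hphi; rewrite /sd_pairing /sd_mem /= in hphi *.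
  have -> : f (x, phi) = f (x, fun _ => 0) + f (0, phi).
    rewrite -[X in _ = X + _](mul1r (f _)) -(hf 1 (x, fun _ => 0) (0, phi) (@lin_zero _ _ _) hphi).
    congr f; rewrite /=; f_equal; first by rewrite scale1r addr0.
    by fext; rewrite mulr0 add0r.
  congr (_ + _).
  have eqphi : phi = fun x => \sum_(i <- index_enum 'I_n) phi (e i) * c i x.
    fext; rewrite {1}(he n0) (lin_sum hphi); apply: eq_bigr => i _; ring.
  rewrite [in RHS]eqphi fsum (lin_sum hphi); apply: eq_bigr => i _; ring.
Qed.
End Pairing.



Section Main.
Variables (R : comNzRingType) (A : comAlgType R) (L1 L2 : lmodType A)
    (br1 : L1 -> L1 -> L1) (anc1 : L1 -> A -> A)
    (br2 : L2 -> L2 -> L2) (anc2 : L2 -> A -> A)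
    (act1 : L1 -> L2 -> L2) (act2 : L2 -> L1 -> L1).
Hypothesis HL1 : is_LieRinehart (@memT L1) (lmod_ops L1) br1 anc1.
Hypothesis HL2 : is_LieRinehart (@memT L2) (lmod_ops L2) br2 anc2.
Hypothesis HM1 : is_LRmodule (@memT L1) (lmod_ops L1) br1 anc1 (@memT L2) (lmod_ops L2) act1.
Hypothesis HM2 : is_LRmodule (@memT L2) (lmod_ops L2) br2 anc2 (@memT L1) (lmod_ops L1) act2.
Hypothesis F1 : is_fgp (@memT L1) (lmod_ops L1).
Hypothesis F2 : is_fgp (@memT L2) (lmod_ops L2).

Local Notation memL := (@sd_mem R A L1 L2).
Local Notation memD := (@sd_mem R A L2 L1).
Local Notation brL := (sd_br br1 anc1 act1).
Local Notation ancL := (sd_anc (N:=L2) anc1).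
Local Notation brD := (sd_br br2 anc2 act2).
Local Notation ancD := (sd_anc (N:=L1) anc2).
Local Notation pr := (@sd_pairing R A L1 L2).

Ltac rwrules := rewrite ?(LR_brDl HL1, LR_brDr HL1, LR_brNl HL1, LR_brNr HL1,
  LR_br0l HL1, LR_br0r HL1, LR_brZl HL1, LR_brZr HL1, LR_alt HL1,
  LR_ancD HL1, LR_ancN HL1, LR_anc0 HL1, LR_ancM HL1, LR_ancDl HL1,
  LR_ancNl HL1, LR_anc0l HL1, LR_ancZl HL1, LR_ancbr HL1, LR_ancZ HL1, LR_anc1 HL1,
  LR_brDl HL2, LR_brDr HL2, LR_brNl HL2, LR_brNr HL2,
  LR_br0l HL2, LR_br0r HL2, LR_brZl HL2, LR_brZr HL2, LR_alt HL2,
  LR_ancD HL2, LR_ancN HL2, LR_anc0 HL2, LR_ancM HL2, LR_ancDl HL2,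
  LR_ancNl HL2, LR_anc0l HL2, LR_ancZl HL2, LR_ancbr HL2, LR_ancZ HL2, LR_anc1 HL2,
  LM_actDl HM1, LM_actDr HM1, LM_actNl HM1, LM_actNr HM1, LM_act0l HM1,
  LM_act0r HM1, LM_actZl HM1, LM_actZr HM1, LM_actbr HM1,
  LM_actDl HM2, LM_actDr HM2, LM_actNl HM2, LM_actNr HM2, LM_act0l HM2,
  LM_act0r HM2, LM_actZl HM2, LM_actZr HM2, LM_actbr HM2,
  scale0r, scaler0, addr0, add0r, oppr0, subr0, sub0r, opprK).

Ltac norm := repeat (first [progress rwrules |
   match goal with h : is_Alin ?f |- _ =>
      progress rewrite ?(linD h, linN h, linZ h, lin0 h) end]).

Definition coad' (Y : L1 * (L2 -> A)) (al : L2 * (L1 -> A)) : L2 * (L1 -> A) :=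
  (act1 Y.1 al.1, fun z => anc1 Y.1 (al.2 z) - al.2 (br1 Y.1 z)
                          + anc1 z (Y.2 al.1) - Y.2 (act1 z al.1)).

Lemma coad'_spec Y al : memL Y -> memD al ->
  memD (coad' Y al) /\ forall x, memL x ->
     pr (coad' Y al) x = ancL Y (pr al x) - pr al (brL Y x).
Proof.
case: Y => y chi; case: al => xi psi; rewrite /sd_mem /= => hchi hpsi; split.
  move=> a z w /=; norm; ring.
case=> z th; rewrite /sd_mem /= => hth.
rewrite /sd_pairing /sd_anc /sd_br /dual_act /=; norm; ring.
Qed.

Lemma coadE Y al : memL Y -> memD al ->
  coad memL memD brL ancL pr Y al = coad' Y al.
Proof.
move=> hY hal; rewrite /coad.
set P := (fun ga => _).
have : P (epsilon (inhabits al) P).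
  by apply: epsilon_spec; exists (coad' Y al); exact: coad'_spec.
case=> h1 h2; case: (coad'_spec hY hal) => h3 h4.
case: (sd_pairing_dual L1 F2) => _ _ uniq _.
by apply: uniq => // x hx; rewrite h2 // h4.
Qed.

Definition J1v x y xi : L1 := act2 xi (br1 x y) - br1 x (act2 xi y) + br1 y (act2 xi x)
   + act2 (act1 x xi) y - act2 (act1 y xi) x.
Definition J2v xi eta x : L2 := act1 x (br2 xi eta) - br2 xi (act1 x eta) + br2 eta (act1 x xi)
   + act1 (act2 xi x) eta - act1 (act2 eta x) xi.
Definition Anc x xi a : A := anc1 x (anc2 xi a) - anc2 xi (anc1 x a)
   + anc1 (act2 xi x) a - anc2 (act1 x xi) a.
Definition Kf x (chi : L2 -> A) xi eta : A :=
   chi (J2v xi eta x) + Anc x eta (chi xi) - Anc x xi (chi eta).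

Lemma master x phi y chi xi psi eta om :
  is_Alin phi -> is_Alin chi -> is_Alin psi -> is_Alin om ->
  dstar brD ancD pr (brL (x, phi) (y, chi)) (xi, psi) (eta, om)
  + gbr1 memL memD brL ancL pr (y, chi) (dstar brD ancD pr (x, phi)) (xi, psi) (eta, om)
  - gbr1 memL memD brL ancL pr (x, phi) (dstar brD ancD pr (y, chi)) (xi, psi) (eta, om)
  = om (J1v x y xi) - psi (J1v x y eta) + Kf x chi xi eta - Kf y phi xi eta.
Proof.
move=> hphi hchi hpsi hom.
rewrite /gbr1 !coadE //.
rewrite /dstar /coad' /sd_pairing /sd_br /sd_anc /dual_act /Kf /J1v /J2v /Anc /=.
norm.
rewrite (LR_brC HL1 y x) (LR_brC HL2 (act1 y xi) eta) (LR_brC HL2 (act1 x xi) eta); norm. ring.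
Qed.

Lemma use_eq (a b c k : A) : b = c -> a = k * (b - c) -> a = 0.
Proof. by move=> -> ->; rewrite subrr mulr0. Qed.

Definition CJ1 := forall x y xi (om : L1 -> A), is_Alin om -> om (J1v x y xi) = 0.
Definition CJ2 := forall xi eta x (chi : L2 -> A), is_Alin chi -> chi (J2v xi eta x) = 0.
Definition CAnc := forall x xi a, Anc x xi a = 0.

Lemma twilled_CAnc : twilled br1 anc1 br2 anc2 act1 act2 -> CAnc.
Proof.
case=> _ _ _ _ [_ _ hab _] x xi a.
have := hab (x, 0) (0, xi) a I I; rewrite /=; norm => e.
apply: (use_eq (k := -1) e); rewrite /Anc; ring.
Qed.

Lemma twilled_CJ1 : twilled br1 anc1 br2 anc2 act1 act2 -> CJ1.
Proof.
case=> _ _ _ [_ jac _] _ x y xi om hom.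
have := jac (x, 0) (y, 0) (0, xi) I I I; rewrite /= => /(congr1 fst) /= /(congr1 om).
norm => e.
apply: (use_eq (k := 1) e); rewrite /J1v; norm; ring.
Qed.

Lemma twilled_CJ2 : twilled br1 anc1 br2 anc2 act1 act2 -> CJ2.
Proof.
case=> _ _ _ [_ jac _] _ xi eta x chi hchi.
have := jac (0, xi) (0, eta) (x, 0) I I I; rewrite /= => /(congr1 snd) /= /(congr1 chi).
norm => e.
apply: (use_eq (k := 1) e); rewrite /J2v; norm; ring.
Qed.

Lemma sep (M : lmodType A) (u v : M) : is_fgp (@memT M) (lmod_ops M) ->
  (forall w : M -> A, is_Alin w -> w u = w v) -> u = v.
Proof.
move=> HF H; apply/eqP; rewrite -subr_eq0; apply/eqP; apply: (fgp_sep HF) => w hw.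
by rewrite (linD hw) (linN hw) (H w hw) subrr.
Qed.

Lemma use_eq3 (a b1 c1 b2 c2 b3 c3 k1 k2 k3 : A) : b1 = c1 -> b2 = c2 -> b3 = c3 ->
  a = k1 * (b1 - c1) + k2 * (b2 - c2) + k3 * (b3 - c3) -> a = 0.
Proof. by move=> -> -> -> ->; rewrite !subrr !mulr0 !addr0. Qed.
Lemma use_eq4 (a b1 c1 b2 c2 b3 c3 b4 c4 k1 k2 k3 k4 : A) : b1 = c1 -> b2 = c2 -> b3 = c3 -> b4 = c4 ->
  a = k1 * (b1 - c1) + k2 * (b2 - c2) + k3 * (b3 - c3) + k4 * (b4 - c4) -> a = 0.
Proof. by move=> -> -> -> -> ->; rewrite !subrr !mulr0 !addr0. Qed.
Lemma use_eq2 (a b1 c1 b2 c2 k1 k2 : A) : b1 = c1 -> b2 = c2 ->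
  a = k1 * (b1 - c1) + k2 * (b2 - c2) -> a = 0.
Proof. by move=> -> -> ->; rewrite !subrr !mulr0 !addr0. Qed.

Ltac psep := rewrite /=; f_equal;
  [apply: (sep F1) => w hw | apply: (sep F2) => w hw]; norm.

Lemma conds_twilled : CJ1 -> CJ2 -> CAnc -> twilled br1 anc1 br2 anc2 act1 act2.
Proof.
move=> cj1 cj2 canc; split.
- split.
  + by split.
  + by move=> [x xi] [y eta] [z zeta] _ _ _ /=; rewrite !addrA.
  + by move=> [x xi] [y eta] _ _ /=; rewrite addrC [xi + _]addrC.
  + by split=> [[x xi] _ | [x xi] _] /=; rewrite ?add0r ?addNr.
  + split.
    * by move=> a b [x xi] _ /=; rewrite !scalerA.
    * by move=> [x xi] _ /=; rewrite !scale1r.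
    * by move=> a [x xi] [y eta] _ _ /=; rewrite !scalerDr.
    * by move=> a b [x xi] _ /=; rewrite !scalerDl.
- by [].
- split.
  + move=> [x xi] [y eta] [z zeta] _ _ _; split; psep; ring.
  + move=> r [x xi] [y eta] _ _; split; psep; ring.
- split.
  + move=> [x xi] _; psep; ring.
  + move=> [x xi] [y eta] [z zeta] _ _ _; psep.
    * have := congr1 w (LR_jac HL1 x y z); norm => e0.
      have := cj1 x y zeta w hw; have := cj1 y z xi w hw; have := cj1 z x eta w hw.
      rewrite /J1v; norm => e1 e2 e3.
      apply: (use_eq4 (k1 := 1) (k2 := 1) (k3 := 1) (k4 := 1) e0 e1 e2 e3); ring.
    * have := congr1 w (LR_jac HL2 xi eta zeta); norm => e0.
      have := cj2 xi eta z w hw; have := cj2 eta zeta x w hw; have := cj2 zeta xi y w hw.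
      rewrite /J2v; norm => e1 e2 e3.
      apply: (use_eq4 (k1 := 1) (k2 := 1) (k3 := 1) (k4 := 1) e0 e1 e2 e3); ring.
  + move=> [x xi] _ /=; split.
    * by move=> a b; norm; ring.
    * by move=> r a; norm; rewrite scalerDr.
    * by move=> a b; norm; ring.
- split.
  + by move=> [x xi] [y eta] a _ _ /=; norm; ring.
  + by move=> b [x xi] a _ /=; norm; ring.
  + move=> [x xi] [y eta] a _ _ /=; norm.
    have := canc x eta a; have := canc y xi a; rewrite /Anc => e1 e2.
    apply/eqP; rewrite -subr_eq0; apply/eqP.
    apply: (use_eq2 (k1 := 1) (k2 := -1) e1 e2); ring.
  + move=> [x xi] [y eta] a _ _; psep; ring.
Qed.

Definition compat_cond := forall X Y, memL X -> memL Y -> forall al be, memD al -> memD be ->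
   dstar brD ancD pr (brL X Y) al be
   = - gbr1 memL memD brL ancL pr Y (dstar brD ancD pr X) al be
     + gbr1 memL memD brL ancL pr X (dstar brD ancD pr Y) al be.

Lemma compat_master (l g1 g2 r : A) : l = - g1 + g2 -> l + g1 - g2 = r -> r = 0.
Proof. by move=> -> <-; ring. Qed.

Lemma master_compat (l g1 g2 r : A) : l + g1 - g2 = r -> r = 0 -> l = - g1 + g2.
Proof. by move=> h r0; move: h; rewrite r0 => h; rewrite -[l](subr0) -h; ring. Qed.

Lemma bialg_CJ1 : compat_cond -> CJ1.
Proof.
move=> cc x y xi om hom.
have lz := @lin_zero _ _ L1; have lz2 := @lin_zero _ _ L2.
have := compat_master (cc (x, fun _ => 0) (y, fun _ => 0) lz2 lz2 (xi, fun _ => 0) (0, om) lz hom)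
   (master x y xi 0 lz2 lz2 lz hom) => h.
apply: (use_eq (k := 1) h); rewrite /Kf /Anc /J1v /J2v /=; norm; ring.
Qed.

Lemma bialg_K : compat_cond -> forall x chi xi eta, is_Alin chi -> Kf x chi xi eta = 0.
Proof.
move=> cc x chi xi eta hchi.
have lz := @lin_zero _ _ L1; have lz2 := @lin_zero _ _ L2.
have := compat_master (cc (x, fun _ => 0) (0, chi) lz2 hchi (xi, fun _ => 0) (eta, fun _ => 0) lz lz)
   (master x 0 xi eta lz2 hchi lz lz) => h.
apply: (use_eq (k := 1) h); rewrite /Kf /Anc /J1v /J2v /=; norm; ring.
Qed.

Lemma CJ1_CAnc : CJ1 -> CAnc.
Proof.
move=> cj1.
have fact : forall x y xi b (om : L1 -> A), is_Alin om -> Anc x xi b * om y = 0.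
  move=> x y xi b om hom.
  have := cj1 x (b *: y) xi om hom; have := cj1 x y xi om hom.
  rewrite /J1v; norm => e2 e1.
  apply: (use_eq2 (k1 := -1) (k2 := b) e1 e2); rewrite /Anc; ring.
move=> x xi b.
have hT : is_Alin (fun x => Anc x xi b) by move=> a x1 x2; rewrite /Anc; norm; ring.
case: (fgp_basis F1) => n [c [e [hc he]]].
rewrite -[Anc x xi b]/((fun x => Anc x xi b) x) (he x) (lin_sum hT) big1 // => i _.
by rewrite /= mulrC fact.
Qed.

Lemma K_CJ2 : CAnc -> (forall x chi xi eta, is_Alin chi -> Kf x chi xi eta = 0) -> CJ2.
Proof.
move=> canc hk xi eta x chi hchi.
by have := hk x chi xi eta hchi; rewrite /Kf (canc x eta) (canc x xi) !addr0 subr0.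
Qed.

Lemma main_iff : twilled br1 anc1 br2 anc2 act1 act2 <->
   is_LR_bialgebra memL (sd_ops L1 L2) brL ancL memD (sd_ops L2 L1) brD ancD pr.
Proof.
split.
- move=> T.
  have cj1 := twilled_CJ1 T; have cj2 := twilled_CJ2 T; have canc := twilled_CAnc T.
  split.
  + exact: sd_LR.
  + exact: sd_LR.
  + by split; apply: sd_fgp.
  + exact: sd_pairing_dual.
  + move=> [x phi] [y chi] hX hY [xi psi] [eta om] hal hbe.
    rewrite /sd_mem /= in hX hY hal hbe.
    have h := master x y xi eta hX hY hal hbe.
    rewrite (cj1 x y xi om hbe) (cj1 x y eta psi hal) /Kf (canc x eta) (canc x xi)
      (canc y eta) (canc y xi) (cj2 xi eta x chi hY) (cj2 xi eta y phi hX) in h.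
    apply: (master_compat h); ring.
- case=> _ _ _ _ cc.
  have cj1 := bialg_CJ1 cc; have canc := CJ1_CAnc cj1.
  apply: conds_twilled => //; apply: K_CJ2 => //; exact: bialg_K.
Qed.
End Main.

Unset Implicit Arguments.

Theorem corollary4p9 (R : comNzRingType) (A : comAlgType R) (L1 L2 : lmodType A)
    (br1 : L1 -> L1 -> L1) (anc1 : L1 -> A -> A)
    (br2 : L2 -> L2 -> L2) (anc2 : L2 -> A -> A)
    (act1 : L1 -> L2 -> L2) (act2 : L2 -> L1 -> L1) :
  (exists u : R, 2%:R * u = 1) -> (exists u : R, 3%:R * u = 1) ->
  almost_twilled br1 anc1 br2 anc2 act1 act2 ->
  is_fgp (@memT L1) (lmod_ops L1) -> is_fgp (@memT L2) (lmod_ops L2) ->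
  (twilled br1 anc1 br2 anc2 act1 act2 <->
   is_LR_bialgebra
     (@sd_mem R A L1 L2) (sd_ops L1 L2) (sd_br br1 anc1 act1) (sd_anc (N:=L2) anc1)
     (@sd_mem R A L2 L1) (sd_ops L2 L1) (sd_br br2 anc2 act2) (sd_anc (N:=L1) anc2)
     (@sd_pairing R A L1 L2)).
Proof.
move=> _ _ [HL1 HL2 HM1 HM2] F1 F2.
exact: main_iff.
Qed.
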